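(* Let $E$ be a Grothendieck topos, $A$ a ring object of $E$, and ${A\text{-mod}}$ the category of $A$-modules in $E$, equipped with the Grothendieck topology described in the context. Then this topology on ${A\text{-mod}}$ is subcanonical: for every $A$-module $K$, the presheaf $\operatorname{Hom}_A(-,K)$ on ${A\text{-mod}}$ is a sheaf.
   Context: For an object $U$ of $E$ and a sheaf $M$ in $E$, $\Gamma(U,M)=\operatorname{Hom}_E(U,M)$ denotes the set of sections of $M$ over $U$. The topology on ${A\text{-mod}}$: a family of $A$-module homomorphisms $\{M_i\to M\}_{i\in I}$ is a cover if for every object $U$ of $E$ and every finite subset $\Lambda\subseteq\Gamma(U,M)$ there is a covering family $\{U_k\to U\}$ in $E$ such that for each $k$ there exists some $i\in I$ for which every element of $\Lambda|_{U_k}$ lifts to a section in $\Gamma(U_k,M_i)$ (i.e. finite sets of local sections of $M$ lift, locally in $E$, simultaneously to a single $M_i$). *)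

(* Defs.v *)
From HB Require Import structures.
From Stdlib Require List.
From mathcomp Require Import all_boot all_algebra.
Unset Implicit Arguments. Unset Strict Implicit. Unset Printing Implicit Defensive.
Import GRing.Theory.
Local Open Scope ring_scope.

Record Cat := {
  ob :> Type;
  hom : ob -> ob -> Type;
  idc : forall a, hom a a;
  comp : forall a b c, hom b c -> hom a b -> hom a c;
  comp_id_l : forall a b (f : hom a b), comp a b b (idc b) f = f;
  comp_id_r : forall a b (f : hom a b), comp a a b f (idc a) = f;
  comp_assoc : forall a b c d (h : hom c d) (g : hom b c) (f : hom a b),
      comp a c d h (comp a b c g f) = comp a b d (comp b c d h g) f }.
Arguments hom {_}.
Arguments idc {_}.
Arguments comp {_ _ _ _}.

Section Site.
Variable C : Cat.

Definition is_sieve (c : C) (S : forall d : C, hom d c -> Prop) : Prop :=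
  forall d (f : hom d c), S d f -> forall e (g : hom e d), S e (comp f g).

Record Topology := {
  covers :> forall c : C, (forall d : C, hom d c -> Prop) -> Prop;
  covers_sieve : forall c S, covers c S -> is_sieve c S;
  covers_max : forall c, covers c (fun _ _ => True);
  covers_stable : forall c S, covers c S -> forall d (f : hom d c),
      covers d (fun e (g : hom e d) => S e (comp f g));
  covers_trans : forall c S, covers c S -> forall R, is_sieve c R ->
      (forall d (f : hom d c), S d f -> covers d (fun e (g : hom e d) => R e (comp f g))) ->
      covers c R }.

Variable J : Topology.

Definition is_presheaf (F : C -> Type) (res : forall a b : C, hom a b -> F b -> F a) :=
  (forall a (x : F a), res a a (idc a) x = x) /\
  (forall a b c (f : hom a b) (g : hom b c) (x : F c),
      res a c (comp g f) x = res a b f (res b c g x)).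

Definition is_sheaf (F : C -> Type) (res : forall a b : C, hom a b -> F b -> F a) :=
  forall (c : C) (S : forall d : C, hom d c -> Prop), J c S ->
  forall x : forall d (f : hom d c), S d f -> F d,
    (forall d (f : hom d c) (H : S d f) e (g : hom e d) (H' : S e (comp f g)),
        x e (comp f g) H' = res e d g (x d f H)) ->
    exists s : F c,
      (forall d (f : hom d c) (H : S d f), res d c f s = x d f H) /\
      (forall s' : F c, (forall d (f : hom d c) (H : S d f), res d c f s' = x d f H) ->
                 s' = s).

Record SetSheaf := {
  sh :> C -> Type;
  shres : forall a b : C, hom a b -> sh b -> sh a;
  sh_presheaf : is_presheaf sh shres;
  sh_sheaf : is_sheaf sh shres }.

Record ShMor (U V : SetSheaf) := {
  shmor :> forall a : C, U a -> V a;
  shmor_nat : forall a b (f : hom a b) (x : U b),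
      shmor a (shres U a b f x) = shres V a b f (shmor b x) }.

(* covering families of E (canonical topology = jointly epimorphic families):
   every section of U is locally in the image of some u_k *)
Definition epi_family (U : SetSheaf) (K : Type) (Uk : K -> SetSheaf)
    (uk : forall k, ShMor (Uk k) U) : Prop :=
  forall (c : C) (x : U c),
    J c (fun d (f : hom d c) => exists k (y : Uk k d), uk k d y = shres U d c f x).

Record RingObj := {
  rg :> C -> pzRingType;
  rgres : forall a b : C, hom a b -> rg b -> rg a;
  rgres_add : forall a b (f : hom a b) (r s : rg b),
      rgres a b f (r + s) = rgres a b f r + rgres a b f s;
  rgres_mul : forall a b (f : hom a b) (r s : rg b),
      rgres a b f (r * s) = rgres a b f r * rgres a b f s;
  rgres_one : forall a b (f : hom a b), rgres a b f 1 = 1;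
  rg_presheaf : is_presheaf (fun a => (rg a : Type)) rgres;
  rg_sheaf : is_sheaf (fun a => (rg a : Type)) rgres }.

Record AMod (A : RingObj) := {
  md :> C -> zmodType;
  mdres : forall a b : C, hom a b -> md b -> md a;
  mdres_add : forall a b (f : hom a b) (x y : md b),
      mdres a b f (x + y) = mdres a b f x + mdres a b f y;
  act : forall a : C, A a -> md a -> md a;
  act_addr : forall a (r : A a) (x y : md a), act a r (x + y) = act a r x + act a r y;
  act_addl : forall a (r s : A a) (x : md a), act a (r + s) x = act a r x + act a s x;
  act_mul : forall a (r s : A a) (x : md a), act a (r * s) x = act a r (act a s x);
  act_one : forall a (x : md a), act a 1 x = x;
  act_nat : forall a b (f : hom a b) (r : A b) (x : md b),
      mdres a b f (act b r x) = act a (rgres A a b f r) (mdres a b f x);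
  md_presheaf : is_presheaf (fun a => (md a : Type)) mdres;
  md_sheaf : is_sheaf (fun a => (md a : Type)) mdres }.

Definition AMod_sheaf (A : RingObj) (M : AMod A) : SetSheaf :=
  {| sh := fun a => (M a : Type); shres := mdres A M;
     sh_presheaf := md_presheaf A M; sh_sheaf := md_sheaf A M |}.

Record AHom (A : RingObj) (M N : AMod A) := {
  ahom :> forall a : C, M a -> N a;
  ahom_add : forall a (x y : M a), ahom a (x + y) = ahom a x + ahom a y;
  ahom_act : forall a (r : A a) (x : M a), ahom a (act A M a r x) = act A N a r (ahom a x);
  ahom_nat : forall a b (f : hom a b) (x : M b),
      ahom a (mdres A M a b f x) = mdres A N a b f (ahom b x) }.

Definition Sect (A : RingObj) (U : SetSheaf) (M : AMod A) := ShMor U (AMod_sheaf A M).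

Definition AMod_cover (A : RingObj) (M : AMod A) (I : Type) (Mi : I -> AMod A)
    (g : forall i, AHom A (Mi i) M) : Prop :=
  forall (U : SetSheaf) (Lambda : list (Sect A U M)),
    exists (K : Type) (Uk : K -> SetSheaf) (uk : forall k, ShMor (Uk k) U),
      epi_family U K Uk uk /\
      forall k, exists i, forall s, List.In s Lambda ->
        exists t : Sect A (Uk k) (Mi i),
          forall (c : C) (y : Uk k c), g i c (t c y) = s c (uk k c y).

(* Hom_A(-, K) satisfies the sheaf condition for a cover {g_i : M_i -> M}:
   every family f_i : M_i -> K compatible on the fibre products
   M_i x_M M_j (computed sectionwise) glues to a unique f : M -> K. *)
Definition Hom_sheaf_for (A : RingObj) (K : AMod A) (M : AMod A) (I : Type)
    (Mi : I -> AMod A) (g : forall i, AHom A (Mi i) M) : Prop :=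
  forall f : forall i, AHom A (Mi i) K,
    (forall i j (c : C) (x : Mi i c) (y : Mi j c),
        g i c x = g j c y -> f i c x = f j c y) ->
    exists h : AHom A M K,
      (forall i (c : C) (x : Mi i c), h c (g i c x) = f i c x) /\
      (forall h' : AHom A M K, (forall i (c : C) (x : Mi i c), h' c (g i c x) = f i c x) ->
         forall (c : C) (x : M c), h' c x = h c x).

Definition AMod_subcanonical (A : RingObj) : Prop :=
  forall (K M : AMod A) (I : Type) (Mi : I -> AMod A) (g : forall i, AHom A (Mi i) M),
    AMod_cover A M I Mi g -> Hom_sheaf_for A K M I Mi g.

End Site.

(* Main.v *)
Require Import Defs.
From mathcomp Require Import all_boot all_algebra.
From Stdlib Require Import ClassicalEpsilon FunctionalExtensionality PropExtensionality.
Import GRing.Theory.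
Local Open Scope ring_scope.

#[local] Arguments mdres {C J A} a0 {a b} _ _.
#[local] Arguments act {C J A} a0 {a} _ _.
#[local] Arguments rgres {C J} r0 {a b} _ _.

Lemma sep_of (C : Cat) (J : Topology C) (F : C -> Type) res :
  is_presheaf C F res -> is_sheaf C J F res ->
  forall c S, J c S -> forall s s' : F c,
  (forall d f, S d f -> res d c f s = res d c f s') -> s = s'.
Proof.
move=> [_ Pc] Sh c S JS s s' E.
have [t [_ U]] := Sh c S JS (fun d f _ => res d c f s)
  (fun d f H e g H' => Pc _ _ _ _ _ _).
rewrite (U s) //; symmetry; apply: U => d f H; by rewrite E.
Qed.

Lemma upclose (C : Cat) (J : Topology C) c S R :
  J c S -> is_sieve C c R -> (forall d f, S d f -> R d f) -> J c R.
Proof.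
move=> JS sR SR; apply: (covers_trans C J c S JS R sR) => d f Sf.
have -> : (fun e (g : Defs.hom e d) => R e (Defs.comp f g)) = (fun _ _ => True).
  apply: functional_extensionality_dep => e; apply: functional_extensionality => g.
  apply: propositional_extensionality; split => // _.
  exact: sR _ _ (SR _ _ Sf) _ _.
exact: covers_max.
Qed.

Definition prodSh (C : Cat) (J : Topology C) (A : RingObj C J) (M : AMod C J A) :
  SetSheaf C J.
refine {| sh := fun a => (M a * M a)%type;
          shres := fun a b f p => (mdres M f p.1, mdres M f p.2) |}.
- have [P1 P2] := md_presheaf C J A M.
  split; [move=> a [x y] /=; by rewrite !P1 | move=> a b c f g [x y] /=; by rewrite !P2].
- move=> c S JS x cx.
  have [s1 [H1 U1]] := md_sheaf C J A M c S JS (fun d f H => (x d f H).1)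
    (fun d f H e g H' => f_equal fst (cx d f H e g H')).
  have [s2 [H2 U2]] := md_sheaf C J A M c S JS (fun d f H => (x d f H).2)
    (fun d f H e g H' => f_equal snd (cx d f H e g H')).
  exists (s1, s2); split.
  + move=> d f H /=; rewrite H1 H2; by case: (x d f H).
  + move=> [t1 t2] Ht /=; congr pair.
    * apply: U1 => d f H; by rewrite -(Ht d f H).
    * apply: U2 => d f H; by rewrite -(Ht d f H).
Defined.

Definition pr1S C J A M : ShMor C J (prodSh C J A M) (AMod_sheaf C J A M) :=
  Build_ShMor C J (prodSh C J A M) (AMod_sheaf C J A M) (fun a (p : prodSh C J A M a) => p.1) (fun _ _ _ _ => erefl).
Definition pr2S C J A M : ShMor C J (prodSh C J A M) (AMod_sheaf C J A M) :=
  Build_ShMor C J (prodSh C J A M) (AMod_sheaf C J A M) (fun a (p : prodSh C J A M a) => p.2) (fun _ _ _ _ => erefl).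

Lemma lift2 (C : Cat) (J : Topology C) (A : RingObj C J) (M : AMod C J A)
  (I : Type) (Mi : I -> AMod C J A) (g : forall i, AHom C J A (Mi i) M) :
  AMod_cover C J A M I Mi g -> forall c (m1 m2 : M c),
  J c (fun d f => exists i (a b : Mi i d), g i d a = mdres M f m1 /\ g i d b = mdres M f m2).
Proof.
move=> cov c m1 m2.
have [Kt [Uk [uk [ep H]]]] := cov (prodSh C J A M) (pr1S C J A M :: pr2S C J A M :: nil).
apply: upclose (ep c (m1, m2)) _ _.
- move=> d f [i [a [b [Ea Eb]]]] e h.
  exists i, (mdres (Mi i) h a), (mdres (Mi i) h b).
  rewrite !ahom_nat Ea Eb !(proj2 (md_presheaf C J A M)); by split.
- move=> d f [k [y E]].
  have [i Hi] := H k.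
  have [t1 T1] := Hi (pr1S C J A M) (or_introl erefl).
  have [t2 T2] := Hi (pr2S C J A M) (or_intror (or_introl erefl)).
  exists i, (t1 d y), (t2 d y); rewrite T1 T2 /= E; by split.
Qed.

Theorem mainTheorem1 (C : Cat) (J : Topology C) (A : RingObj C J) :
  AMod_subcanonical C J A.
Proof.
move=> K M I Mi g cov fi compat.
pose P c (m : M c) (s : K c) := forall d (f : Defs.hom d c) i (z : Mi i d),
  g i d z = mdres M f m -> mdres K f s = fi i d z.
have lift := lift2 C J A M I Mi g cov.
have sepK := sep_of C J _ _ (md_presheaf C J A K) (md_sheaf C J A K).
have PM := proj2 (md_presheaf C J A M).
have PK := proj2 (md_presheaf C J A K).
have uniqP : forall c m s s', P c m s -> P c m s' -> s = s'.
  move=> c m s s' Ps Ps'; apply: (sepK c _ (lift c m m)).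
  move=> d f [i [a [b [Ea _]]]]; by rewrite (Ps _ _ _ _ Ea) (Ps' _ _ _ _ Ea).
have PR : forall c m s, P c m s -> forall d (f : Defs.hom d c), P d (mdres M f m) (mdres K f s).
  move=> c m s Ps d f e f' i z Ez; rewrite -PK; apply: Ps; by rewrite PM.
have existP : forall c m, exists s, P c m s.
  move=> c m.
  pose S := fun d (f : Defs.hom d c) =>
    exists p : {i : I & Mi i d}, g (projT1 p) d (projT2 p) = mdres M f m.
  have JS : J c S.
    apply: upclose (lift c m m) _ _.
    + move=> d f [[i a] /= Ea] e h; exists (existT _ i (mdres (Mi i) h a)) => /=.
      by rewrite ahom_nat Ea PM.
    + move=> d f [i [a [_ [Ea _]]]]; by exists (existT _ i a).
  pose x d f (H : S d f) :=
    let p := proj1_sig (constructive_indefinite_description _ H) in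
    fi (projT1 p) d (projT2 p).
  have cx : forall d (f : Defs.hom d c) (H : S d f) e (h : Defs.hom e d)
      (H' : S e (Defs.comp f h)), x e (Defs.comp f h) H' = mdres K h (x d f H).
    move=> d f H e h H'; rewrite /x /=.
    case: (constructive_indefinite_description _ H) => [[i z] /= Ez].
    case: (constructive_indefinite_description _ H') => [[j w] /= Ew].
    rewrite -ahom_nat; apply: compat; by rewrite ahom_nat Ez Ew PM.
  have [s [Hs _]] := md_sheaf C J A K c S JS x cx.
  exists s => d f i z Ez.
  have H : S d f by exists (existT _ i z).
  rewrite (Hs d f H) /x /=.
  case: (constructive_indefinite_description _ H) => [[j w] /= Ew].
  apply: compat; by rewrite Ew Ez.
pose h c m := proj1_sig (constructive_indefinite_description _ (existP c m)).
have hP : forall c m, P c m (h c m) :=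
  fun c m => proj2_sig (constructive_indefinite_description _ (existP c m)).
have hadd : forall c (m1 m2 : M c), h c (m1 + m2) = h c m1 + h c m2.
  move=> c m1 m2; apply: uniqP (hP _ _) _ => d f i z Ez.
  rewrite mdres_add.
  apply: (sepK d _ (lift d (mdres M f m1) (mdres M f m2))).
  move=> e f' [j [a [b [Ea Eb]]]].
  rewrite mdres_add (PR _ _ _ (hP c m1) d f e f' j a Ea)
    (PR _ _ _ (hP c m2) d f e f' j b Eb) -ahom_add -ahom_nat.
  apply: compat; by rewrite ahom_nat Ez ahom_add Ea Eb !mdres_add.
have hact : forall c (r : A c) (m : M c), h c (act M r m) = act K r (h c m).
  move=> c r m; apply: uniqP (hP _ _) _ => d f i z Ez.
  apply: (sepK d _ (lift d (mdres M f m) (mdres M f m))).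
  move=> e f' [j [a [_ [Ea _]]]].
  rewrite !act_nat (PR _ _ _ (hP c m) d f e f' j a Ea) -ahom_act -ahom_nat.
  apply: compat; by rewrite ahom_nat Ez ahom_act Ea !act_nat.
have hnat : forall a b (f : Defs.hom a b) (m : M b), h a (mdres M f m) = mdres K f (h b m).
  move=> a b f m; exact: uniqP (hP _ _) (PR _ _ _ (hP b m) a f).
exists (Build_AHom C J A M K h hadd hact hnat); split.
- move=> i c x /=; apply: uniqP (hP _ _) _ => d f j z Ez.
  rewrite -ahom_nat; apply: compat; by rewrite ahom_nat Ez.
- move=> h' Hh' c m /=; apply: uniqP _ (hP _ _) => d f i z Ez.
  by rewrite -ahom_nat -Ez Hh'.
Qed.
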